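(* Let $R$ and $B$ be $n\times n$ nonnegative matrices that have the same entrywise positive left and right eigenvectors $u$ and $v$ for eigenvalue $1$ (i.e. $Rv=v$, $R^Tu=u$, $Bv=v$, $B^Tu=u$). Then for every nonempty $S\subseteq[n]$, \[ \phi_S(RB)\le\phi_S(R)+\phi_S(B). \]
   Context: For a nonnegative $M$ with $Mv=v$, $M^Tu=u$, $\phi_S(M)=\langle\mathbf 1_S,D_uMD_v\mathbf 1_{\overline S}\rangle/\langle\mathbf 1_S,D_uMD_v\mathbf 1\rangle$, where $D_x$ is the diagonal matrix with $x$ on the diagonal and $\mathbf 1_S$ is the indicator vector of $S$. *)

(* Defs.v *)
From mathcomp Require Import all_boot all_order all_algebra.
Set Implicit Arguments. Unset Strict Implicit. Unset Printing Implicit Defensive.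
Import Order.TTheory GRing.Theory Num.Theory.
Local Open Scope ring_scope.

Definition Dg {R : ringType} {n : nat} (x : 'cV[R]_n) : 'M[R]_n :=
  diag_mx x^T.

Definition ind {R : ringType} {n : nat} (S : {set 'I_n}) : 'cV[R]_n :=
  \col_i (if i \in S then 1 else 0).

Definition ip {R : ringType} {n : nat} (x y : 'cV[R]_n) : R :=
  (x^T *m y) 0 0.

Definition phi {R : fieldType} {n : nat} (u v : 'cV[R]_n) (S : {set 'I_n})
  (M : 'M[R]_n) : R :=
  ip (ind S) (Dg u *m M *m Dg v *m ind (~: S)) /
  ip (ind S) (Dg u *m M *m Dg v *m const_mx 1).

Definition nonneg_mx {R : numDomainType} {m n : nat} (M : 'M[R]_(m, n)) : Prop :=
  forall i j, 0 <= M i j.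

Definition pos_vec {R : numDomainType} {n : nat} (x : 'cV[R]_n) : Prop :=
  forall i, 0 < x i 0.

(* Main.v *)
Require Import Defs.
From mathcomp Require Import all_boot all_order all_algebra.
Import Order.TTheory GRing.Theory Num.Theory.
Local Open Scope ring_scope.

Lemma ip_expr (F : realFieldType) (n : nat) (M : 'M[F]_n) (u v w : 'cV[F]_n)
  (S : {set 'I_n}) :
  ip (ind S) (Dg u *m M *m Dg v *m w) =
  \sum_(i in S) \sum_j u i 0 * M i j * v j 0 * w j 0.
Proof.
rewrite /ip /Dg /ind !mxE (bigID (fun i => i \in S)) /=.
rewrite [X in _ + X]big1 ?addr0; last first.
  by move=> i /negbTE Hi; rewrite !mxE Hi mul0r.
apply: eq_bigr => i Hi; rewrite !mxE Hi mul1r.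
apply: eq_bigr => j _; rewrite !mul_mx_diag !mul_diag_mx !mxE.
by [].
Qed.

Theorem lemma3p12 (F : realFieldType) (n : nat) (Rm Bm : 'M[F]_n)
  (u v : 'cV[F]_n) :
  nonneg_mx Rm -> nonneg_mx Bm ->
  pos_vec u -> pos_vec v ->
  Rm *m v = v -> Rm^T *m u = u ->
  Bm *m v = v -> Bm^T *m u = u ->
  forall S : {set 'I_n}, S != set0 ->
    phi u v S (Rm *m Bm) <= phi u v S Rm + phi u v S Bm.
Proof.
move=> HR HB Hu Hv Rv Ru Bv Bu S _.
have den : forall M : 'M[F]_n, M *m v = v ->
    ip (ind S) (Dg u *m M *m Dg v *m const_mx 1) = \sum_(i in S) u i 0 * v i 0.
  move=> M Mv; rewrite ip_expr; apply: eq_bigr => i _.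
  rewrite -[in RHS]Mv mxE mulr_sumr; apply: eq_bigr => j _.
  by rewrite mxE mulr1 mulrA.
rewrite /phi !den //; last by rewrite -mulmxA Bv Rv.
rewrite -mulrDl; apply: ler_wpM2r.
  by rewrite invr_ge0 sumr_ge0 // => i _; rewrite mulr_ge0 // ltW.
rewrite !ip_expr.
set c := fun j : 'I_n => ind (~: S) j 0 : F.
have c0 : forall j, 0 <= c j by move=> j; rewrite /c mxE; case: ifP.
have c1 : forall j, c j <= 1 by move=> j; rewrite /c mxE; case: ifP.
have cS : forall k, k \notin S -> c k = 1 by move=> k kS; rewrite /c mxE inE kS.
have u0 : forall i, 0 <= u i 0 by move=> i; apply: ltW.
have v0 : forall i, 0 <= v i 0 by move=> i; apply: ltW.
set T := fun i j k => u i 0 * Rm i k * (Bm k j * v j 0 * c j).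
have T0 : forall i j k, 0 <= T i j k.
  by move=> i j k; rewrite /T !mulr_ge0 ?u0 ?v0 ?c0 ?HR ?HB.
have -> : \sum_(i in S) \sum_j u i 0 * (Rm *m Bm) i j * v j 0 * c j =
    \sum_(i in S) \sum_j \sum_k T i j k.
  apply: eq_bigr => i _; apply: eq_bigr => j _.
  rewrite mxE mulr_sumr !mulr_suml; apply: eq_bigr => k _.
  by rewrite /T !mulrA.
have split : forall i j, \sum_k T i j k =
   \sum_(k in S) T i j k + \sum_(k | k \notin S) T i j k.
  by move=> i j; rewrite (bigID (fun k => k \in S)).
under eq_bigr => i _ do under eq_bigr => j _ do rewrite split.
under eq_bigr => i _ do rewrite big_split.
rewrite big_split /= addrC; apply: lerD.
- apply: ler_sum => i _.
  rewrite exchange_big /= [X in _ <= X](bigID (fun k => k \in S)) /=.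
  apply: ler_wpDl; first by apply: sumr_ge0 => k _; rewrite !mulr_ge0 ?u0 ?v0 ?c0 ?HR ?HB.
  apply: ler_sum => k kS; rewrite mxE inE kS mulr1.
  rewrite /T -mulr_sumr; apply: ler_wpM2l; first by rewrite mulr_ge0 ?u0 ?HR.
  have -> : v k 0 = (Bm *m v) k 0 by rewrite Bv.
  rewrite mxE; apply: ler_sum => j _.
  by rewrite -[X in _ <= X]mulr1 ler_wpM2l ?mulr_ge0 ?HB ?v0.
- under eq_bigr => i _ do rewrite exchange_big.
  rewrite exchange_big /=.
  under eq_bigr => k _ do rewrite exchange_big.
  apply: ler_sum => k kS.
  apply: ler_sum => j _.
  rewrite /T -mulr_suml -!mulrA ler_wpM2r ?mulr_ge0 ?HB ?v0 ?c0 //.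
  have -> : u k 0 = (Rm^T *m u) k 0 by rewrite Ru.
  rewrite mxE [X in _ <= X](bigID (fun i => i \in S)) /=; apply: ler_wpDr.
    by apply: sumr_ge0 => i _; rewrite mxE mulr_ge0 ?u0 ?HR.
  by apply: ler_sum => i _; rewrite mxE mulrC.
Qed.
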